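(* Let $j$ be a divisor of $n$ with $1\le j\le n-1$, and let $0\leq i\leq n-1$. If $\gcd(i,n)=\gcd(i,j)$, or $\gcd(i,n)$ divides $j$, then there exists $N\geq 0$ with $c_i^N\in R_jA$.
   Context: $\Bbbk$ is an algebraically closed field of characteristic zero, $n\ge2$, $A=\Bbbk_{-1}[x_0,\dots,x_{n-1}]$ is generated by degree-one $x_0,\dots,x_{n-1}$ with $x_ix_j=-x_jx_i$ ($i\ne j$), $C_n=\langle\sigma\rangle$ acts by $\sigma(x_i)=x_{i+1}$ (indices in $\mathbb{Z}_n$). Let $\omega$ be a primitive $n$th root of unity, $b_\gamma=\frac1n\sum_{i=0}^{n-1}\omega^{i\gamma}x_i$, and $c_k=b_lb_{k-l}+b_{k-l}b_l$ (independent of $l$) for $k\in\mathbb{Z}_n$. $R_j=\{a\in A\mid\sigma(a)=\omega^{-j}a\}$ and $R_jA$ is the right ideal of $A$ generated by $R_j$. Here $\gcd(0,n)=n$. *)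

(* Defs.v *)
From HB Require Import structures.
From mathcomp Require Import all_boot all_order all_algebra.
Set Implicit Arguments. Unset Strict Implicit. Unset Printing Implicit Defensive.
Import GRing.Theory.
Local Open Scope ring_scope.

(* The skew polynomial ring A = k_{-1}[x_0,...,x_{n-1}] is modelled as the
   twisted monoid algebra of N^n: an element is its coefficient function on
   ordered monomials x^a = x_0^{a_0} x_1^{a_1} ... x_{n-1}^{a_{n-1}}
   (a PBW basis of A).  Elements of A are the finitely supported ones. *)

Definition mon (n : nat) := {ffun 'I_n -> nat}.
Definition elt (K : Type) (n : nat) := mon n -> K.

Definition finsupp (K : fieldType) (n : nat) (f : elt K n) : Prop :=
  exists s : seq (mon n), forall c, c \notin s -> f c = 0.

(* x^a x^b = sgn a b x^(a+b), sgn a b = (-1)^(sum_{i>k} a_i b_k) *)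
Definition sgn (K : fieldType) (n : nat) (a b : mon n) : K :=
  (-1) ^+ (\sum_(i < n) \sum_(k < n | (k < i)%N) a i * b k)%N.

Definition msub (n : nat) (c a : mon n) : mon n := [ffun i => c i - a i]%N.

Definition ord2nat (n m : nat) (a : {ffun 'I_n -> 'I_m}) : mon n :=
  [ffun i => nat_of_ord (a i)].

Definition mul (K : fieldType) (n : nat) (f g : elt K n) : elt K n :=
  fun c =>
    \sum_(a : {ffun 'I_n -> 'I_(\sum_(i < n) c i)%N.+1} |
            [forall i, (a i <= c i)%N])
      @sgn K n (ord2nat a) (msub c (ord2nat a)) * f (ord2nat a)
        * g (msub c (ord2nat a)).

Definition one (K : fieldType) (n : nat) : elt K n :=
  fun c => if c == [ffun _ => 0%N] then 1 else 0.

Definition pw (K : fieldType) (n : nat) (f : elt K n) (N : nat) : elt K n :=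
  iter N (mul f) (@one K n).

Definition xv (K : fieldType) (n : nat) (i : 'I_n) : elt K n :=
  fun c => if c == [ffun k => nat_of_bool (k == i)] then 1 else 0.

(* The automorphism sigma with sigma(x_i) = x_{i+1}.  On ordered monomials,
   sigma(x^a) = (-1)^(c_0 (c_1+...+c_{n-1})) x^c where c_k = a_{k-1}; hence
   sigma(f)(c) = (-1)^(c_0 (c_1+...+c_{n-1})) f(a) with a_k = c_{k+1}. *)
Definition sigma (K : fieldType) (n : nat) (f : elt K n) : elt K n :=
  fun c =>
    (-1) ^+ ((\sum_(k < n | val k == 0%N) c k) *
             (\sum_(k < n | val k != 0%N) c k))%N
    * f [ffun k => c (ordS k)].

Definition bb (K : fieldType) (n : nat) (w : K) (g : nat) : elt K n :=
  fun c => (n%:R)^-1 * \sum_(i < n) w ^+ (i * g) * @xv K n i c.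

(* c_k = b_l b_{k-l} + b_{k-l} b_l, taken with l = 0 *)
Definition cc (K : fieldType) (n : nat) (w : K) (k : nat) : elt K n :=
  fun c => mul (@bb K n w 0) (@bb K n w k) c + mul (@bb K n w k) (@bb K n w 0) c.

Definition inR (K : fieldType) (n : nat) (w : K) (j : nat) (f : elt K n) : Prop :=
  finsupp f /\ forall c, sigma f c = (w ^+ j)^-1 * f c.

Definition inRA (K : fieldType) (n : nat) (w : K) (j : nat) (f : elt K n) : Prop :=
  exists (m : nat) (r a : nat -> elt K n),
    (forall k, (k < m)%N -> inR w j (r k) /\ finsupp (a k)) /\
    forall c, f c = \sum_(k < m) mul (r k) (a k) c.

(* Main.v *)
Require Import Defs.
From HB Require Import structures.
From mathcomp Require Import all_boot all_order all_algebra.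
From mathcomp Require Import ring zify.
Set Implicit Arguments. Unset Strict Implicit. Unset Printing Implicit Defensive.
Import GRing.Theory.
Local Open Scope ring_scope.

Definition rotm n (x : mon n) : mon n := [ffun k => x (ordS k)].
Definition sc n (x : mon n) : nat :=
  ((\sum_(k < n | val k == 0%N) x k) * (\sum_(k < n | val k != 0%N) x k))%N.
Definition invc n (a b : mon n) : nat :=
  (\sum_(i < n) \sum_(k < n | (k < i)%N) a i * b k)%N.
Definition TT m (a b : mon m.+1) : nat :=
  (\sum_(i < m) \sum_(k < m | (k < i)%N) a (lift ord0 i) * b (lift ord0 k))%N.

Lemma ordS_max m : ordS (@ord_max m) = ord0.
Proof. by apply: val_inj => /=; rewrite modnn. Qed.
Lemma ordS_widen m (i : 'I_m) : ordS (widen_ord (leqnSn m) i) = lift ord0 i.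
Proof. by apply: val_inj => /=; rewrite modn_small // ltnS. Qed.

Lemma sc_split m (x : mon m.+1) :
  sc x = (x ord0 * \sum_(k < m) x (lift ord0 k))%N.
Proof.
rewrite /sc big_mkcond big_ord_recl /= big1 ?addn0 //; congr (_ * _)%N.
by rewrite big_mkcond big_ord_recl /=.
Qed.

Lemma inv_split m (a b : mon m.+1) :
  invc a b = ((\sum_(i < m) a (lift ord0 i)) * b ord0 + TT a b)%N.
Proof.
rewrite /invc /TT big_ord_recl /= big_pred0 // add0n big_distrl -big_split /=.
apply: eq_bigr => i _; rewrite big_mkcond big_ord_recl /=; congr (_ + _)%N.
by rewrite [RHS]big_mkcond; apply: eq_bigr => k _ /=; rewrite ltnS.
Qed.

Lemma inv_rot m (a b : mon m.+1) :
  invc (rotm a) (rotm b) = (TT a b + a ord0 * \sum_(k < m) b (lift ord0 k))%N.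
Proof.
rewrite /invc /TT big_ord_recr /=; congr (_ + _)%N.
  apply: eq_bigr => i _; rewrite big_mkcond big_ord_recr /= ltnNge ltnW //= addn0.
  rewrite [RHS]big_mkcond; apply: eq_bigr => k _ /=.
  by rewrite !ffunE ordS_widen ordS_widen.
rewrite big_distrr big_mkcond big_ord_recr /= ltnn addn0.
by apply: eq_bigr => k _; rewrite ltn_ord !ffunE ordS_max ordS_widen.
Qed.

Lemma sign_nat m (a b c : mon m.+1) (H : forall k, c k = (a k + b k)%N) :
  (sc c + invc (rotm a) (rotm b) =
   invc a b + (sc a + sc b) + 2 * (a ord0 * \sum_(k < m) b (lift ord0 k)))%N.
Proof.
rewrite inv_rot inv_split !sc_split H.
have -> : (\sum_(k < m) c (lift ord0 k) =
   \sum_(k < m) a (lift ord0 k) + \sum_(k < m) b (lift ord0 k))%N.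
  by rewrite -big_split; apply: eq_bigr => k _; rewrite H.
set A := (\sum_(k < m) a _)%N; set B := (\sum_(k < m) b _)%N.
set T := TT a b. ring.
Qed.

Lemma sign_rot (K : fieldType) m (a b c : mon m.+1)
  (H : forall k, c k = (a k + b k)%N) :
  (-1) ^+ sc c * @sgn K _ (rotm a) (rotm b) =
  @sgn K _ a b * ((-1) ^+ sc a * (-1) ^+ sc b).
Proof.
have E2 : (-1 : K) ^+ 2 = 1 by rewrite expr2 mulN1r opprK.
rewrite /sgn -!exprD -/(invc _ _) -/(invc a b) sign_nat // exprD exprM E2 expr1n.
by rewrite mulr1 addnA.
Qed.

Lemma sigmaE (K : fieldType) n (f : elt K n) c :
  sigma f c = (-1) ^+ sc c * f (rotm c).
Proof. by []. Qed.

Lemma sum_rotm n (c : mon n) : (\sum_(i < n) rotm c i = \sum_(i < n) c i)%N.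
Proof.
rewrite [RHS](reindex_inj (@ordS_inj n)) /=.
by apply: eq_bigr => i _; rewrite ffunE.
Qed.

Lemma sigma_mul (K : fieldType) m (f g : elt K m.+1) c :
  sigma (Defs.mul f g) c = Defs.mul (sigma f) (sigma g) c.
Proof.
rewrite sigmaE /Defs.mul sum_rotm mulr_sumr.
set S := (\sum_(i < m.+1) c i)%N.
rewrite (reindex (fun a : {ffun 'I_m.+1 -> 'I_S.+1} => [ffun k => a (ordS k)])).
  apply: eq_big => a.
    apply/forallP/forallP => H i.
      by have := H (ord_pred i); rewrite !ffunE ord_predK.
    by rewrite !ffunE; apply: H.
  move/forallP => H.
  have E1 : ord2nat [ffun k => a (ordS k)] = rotm (ord2nat a).
    by apply/ffunP => k; rewrite !ffunE.
  have E2 : msub (rotm c) (rotm (ord2nat a)) = rotm (msub c (ord2nat a)).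
    by apply/ffunP => k; rewrite !ffunE.
  rewrite E1 E2 !sigmaE.
  have Hs := @sign_rot K m (ord2nat a) (msub c (ord2nat a)) c.
  rewrite -/(rotm (ord2nat a)) -/(rotm (msub c (ord2nat a))).
  transitivity ((-1) ^+ sc c * sgn K (rotm (ord2nat a)) (rotm (msub c (ord2nat a)))
     * f (rotm (ord2nat a)) * g (rotm (msub c (ord2nat a)))); first by rewrite !mulrA.
  rewrite Hs; first ring.
  move=> k; rewrite !ffunE subnKC //.
  by have := H (ord_pred k); rewrite !ffunE ord_predK.
apply: onW_bij.
exists (fun a : {ffun 'I_m.+1 -> 'I_S.+1} => [ffun k => a (ord_pred k)]).
  by move=> a; apply/ffunP => k; rewrite !ffunE ord_predK.
by move=> a; apply/ffunP => k; rewrite !ffunE ordSK.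
Qed.

Definition eig (K : fieldType) n (mu : K) (f : elt K n) :=
  forall c, sigma f c = mu * f c.

Lemma mul_ext (K : fieldType) n (f1 f2 g1 g2 : elt K n) c :
  (forall x, f1 x = f2 x) -> (forall x, g1 x = g2 x) ->
  Defs.mul f1 g1 c = Defs.mul f2 g2 c.
Proof. by move=> Hf Hg; apply: eq_bigr => a _; rewrite Hf Hg. Qed.

Lemma mul_scale (K : fieldType) n (f g : elt K n) (mu nu : K) c :
  Defs.mul (fun x => mu * f x) (fun x => nu * g x) c = mu * nu * Defs.mul f g c.
Proof. rewrite /Defs.mul mulr_sumr; apply: eq_bigr => a _; ring. Qed.

Lemma eig_mul (K : fieldType) m (f g : elt K m.+1) mu nu :
  eig mu f -> eig nu g -> eig (mu * nu) (Defs.mul f g).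
Proof.
move=> Hf Hg c; rewrite sigma_mul -mul_scale; exact: mul_ext.
Qed.

Lemma eig_add (K : fieldType) n (f g : elt K n) mu :
  eig mu f -> eig mu g -> eig mu (fun c => f c + g c).
Proof.
move=> Hf Hg c; have := Hf c; have := Hg c; rewrite !sigmaE => E1 E2.
by rewrite mulrDr E1 E2 mulrDr.
Qed.

Lemma eig_one (K : fieldType) n : eig 1 (@Defs.one K n).
Proof.
move=> c; rewrite sigmaE mul1r /Defs.one.
have [->|Hc] := eqVneq c [ffun _ => 0%N].
  have -> : rotm [ffun _ : 'I_n => 0%N] = [ffun _ => 0%N] by apply/ffunP => k; rewrite !ffunE.
  rewrite eqxx mulr1 /sc big1 ?mul0n ?expr0 // => k _; by rewrite ffunE.
case: eqP => [H|_]; last by rewrite mulr0.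
case/eqP: Hc; apply/ffunP => k; have := congr1 (fun x : mon n => x (ord_pred k)) H.
by rewrite !ffunE ord_predK.
Qed.

Lemma eig_pw (K : fieldType) m (f : elt K m.+1) mu N :
  eig mu f -> eig (mu ^+ N) (pw f N).
Proof.
move=> Hf; elim: N => [|N IH]; first by rewrite expr0; exact: eig_one.
rewrite exprS; exact: eig_mul.
Qed.

Definition ev n (i : 'I_n) : mon n := [ffun k => nat_of_bool (k == i)].

Lemma rotm_ev n (c : mon n) i : (rotm c == ev i) = (c == ev (ordS i)).
Proof.
apply/eqP/eqP => H.
  apply/ffunP => k; have := congr1 (fun x : mon n => x (ord_pred k)) H.
  by rewrite !ffunE ord_predK -(inj_eq (@ordS_inj n)) ord_predK.
by apply/ffunP => k; rewrite H !ffunE (inj_eq (@ordS_inj n)).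
Qed.

Lemma sc_ev m (p : 'I_m.+1) : sc (ev p) = 0%N.
Proof.
rewrite sc_split !ffunE; case: eqP => [<-|] //=.
by rewrite big1 ?muln0 // => k _; rewrite ffunE eq_sym (negbTE (neq_lift _ _)).
Qed.

Lemma eig_bb (K : fieldType) m (w : K) (hw : m.+1.-primitive_root w) g :
  eig ((w ^+ g)^-1) (@bb K m.+1 w g).
Proof.
move=> c; rewrite sigmaE /bb mulrCA [RHS]mulrCA; congr (_ * _).
rewrite mulr_sumr.
rewrite mulr_sumr [RHS](reindex_inj (@ordS_inj m.+1)) /=.
apply: eq_bigr => i _.
have -> : (-1) ^+ sc c * (w ^+ (i * g) * xv K i (rotm c)) =
          w ^+ (i * g) * xv K (ordS i) c.
  rewrite /xv -/(ev i) -/(ev (ordS i)) rotm_ev mulrCA.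
  case: eqP => [->|_]; last by rewrite !mulr0.
  by rewrite sc_ev expr0 mul1r.
rewrite mulrA; congr (_ * _).
have wn0 : w != 0.
  apply/negP => /eqP w0; have := prim_expr_order hw.
  by rewrite w0 expr0n /= => /eqP; rewrite eq_sym oner_eq0.
rewrite -[w ^+ (_ %% _ * g)](prim_expr_mod hw) modnMml (prim_expr_mod hw) mulSn exprD.
by rewrite mulrA mulVf ?mul1r // expf_neq0.
Qed.

Lemma mul_one (K : fieldType) n (f : elt K n) c :
  Defs.mul f (@Defs.one K n) c = f c.
Proof.
rewrite /Defs.mul; set S := (\sum_(i < n) c i)%N.
have cS : forall i, (c i < S.+1)%N.
  by move=> i; rewrite ltnS /S (bigD1 i) //= leq_addr.
pose a0 : {ffun 'I_n -> 'I_S.+1} := [ffun i => inord (c i)].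
have Ea0 : ord2nat a0 = c by apply/ffunP => i; rewrite !ffunE inordK.
have Ha0 : [forall i, (a0 i <= c i)%N].
  by apply/forallP => i; rewrite ffunE inordK.
rewrite (bigD1 a0) //= big1 ?addr0.
  rewrite Ea0.
  have -> : msub c c = [ffun _ => 0%N] by apply/ffunP => i; rewrite !ffunE subnn.
  rewrite /Defs.one eqxx mulr1 /sgn big1 ?expr0 ?mul1r // => i _.
  by rewrite big1 // => k _; rewrite ffunE muln0.
move=> a /andP [/forallP Ha Hne]; rewrite /Defs.one.
case: eqP => [H|_]; last by rewrite mulr0.
case/eqP: Hne; apply/ffunP => i; rewrite ffunE; apply: val_inj; rewrite /= inordK //.
have := congr1 (fun x : mon n => x i) H; rewrite !ffunE => /eqP.
rewrite subn_eq0 => Hci; apply/eqP; rewrite eqn_leq Hci.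
by rewrite Ha.
Qed.

Lemma fs_mul (K : fieldType) n (f g : elt K n) :
  finsupp f -> finsupp g -> finsupp (Defs.mul f g).
Proof.
move=> [s Hs] [t Ht].
exists [seq ([ffun i => x i + y i]%N : mon n) | x : mon n <- s, y : mon n <- t] => c Hc.
apply: big1 => a /forallP Ha.
have [xs|xns] := boolP (ord2nat a \in s); last by rewrite (Hs _ xns) mulr0 mul0r.
have [yt|ynt] := boolP (msub c (ord2nat a) \in t); last by rewrite (Ht _ ynt) mulr0.
case/negP: Hc.
have -> : c = [ffun i => ord2nat a i + msub c (ord2nat a) i]%N.
  by apply/ffunP => i; rewrite !ffunE subnKC // Ha.
by apply: (allpairs_f (fun x y : mon n => [ffun i => x i + y i]%N)).
Qed.

Lemma fs_add (K : fieldType) n (f g : elt K n) :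
  finsupp f -> finsupp g -> finsupp (fun c => f c + g c).
Proof.
move=> [s Hs] [t Ht]; exists (s ++ t) => c; rewrite mem_cat negb_or => /andP[h1 h2].
by rewrite Hs // Ht // addr0.
Qed.

Lemma fs_one (K : fieldType) n : finsupp (@Defs.one K n).
Proof.
exists [:: [ffun _ => 0%N]] => c; rewrite inE /Defs.one => /negbTE -> //.
Qed.

Lemma fs_bb (K : fieldType) n (w : K) g : finsupp (@bb K n w g).
Proof.
exists [seq ev i | i <- enum 'I_n] => c Hc; rewrite /bb big1 ?mulr0 // => i _.
rewrite /xv -/(ev i); case: eqP => [E|_]; last by rewrite mulr0.
by case/negP: Hc; rewrite E; apply: map_f; rewrite mem_enum.
Qed.

Lemma fs_pw (K : fieldType) n (f : elt K n) N : finsupp f -> finsupp (pw f N).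
Proof.
move=> Hf; elim: N => [|N IH]; first exact: fs_one.
exact: fs_mul.
Qed.

Theorem lemma5p4 (K : closedFieldType) (hK : [pchar K] =i pred0)
  (n : nat) (hn : (2 <= n)%N) (w : K) (hw : n.-primitive_root w)
  (j i : nat) (hjn : (j %| n)%N) (hj1 : (1 <= j)%N) (hj2 : (j <= n - 1)%N)
  (hi : (i <= n - 1)%N)
  (hgcd : (gcdn i n == gcdn i j) || (gcdn i n %| j)%N) :
  exists N : nat, @inRA K n w j (pw (@cc K n w i) N).
Proof.
case: n hn hw hjn hj2 hi hgcd => [//|m] hn hw hjn hj2 hi hgcd.
have i0 : (0 < i)%N.
  case: i hi hgcd => // hi; rewrite gcd0n gcd0n => /orP[/eqP E|H]; first lia.
  by have := dvdn_leq hj1 H; lia.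
have hg : (gcdn i m.+1 %| j)%N.
  by case/orP: hgcd => [/eqP ->|//]; exact: dvdn_gcdr.
case: (egcdnP m.+1 i0) => km kn Heq _.
set g := gcdn i m.+1 in hg Heq.
pose N := (km * (j %/ g))%N.
have wij : w ^+ (i * N) = w ^+ j.
  rewrite /N mulnA [(i * km)%N]mulnC exprM Heq exprD [(kn * _)%N]mulnC exprM.
  by rewrite (prim_expr_order hw) expr1n mul1r -exprM mulnC divnK.
have Hcc : eig ((w ^+ i)^-1) (@cc K m.+1 w i).
  have H1 := eig_mul (eig_bb hw 0) (eig_bb hw i).
  have H2 := eig_mul (eig_bb hw i) (eig_bb hw 0).
  rewrite expr0 invr1 mul1r in H1; rewrite expr0 invr1 mulr1 in H2.
  move=> c; exact: (eig_add H1 H2 c).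
have Hf := eig_pw N Hcc.
have Fcc : finsupp (@cc K m.+1 w i).
  by apply: fs_add; apply: fs_mul; apply: fs_bb.
exists N, 1%N, (fun _ => pw (@cc K m.+1 w i) N), (fun _ => @Defs.one K m.+1).
split.
  move=> k _; split; last exact: fs_one.
  split; first exact: fs_pw.
  by move=> c; rewrite Hf exprVn -exprM wij.
by move=> c; rewrite big_ord1 mul_one.
Qed.
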